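(* Let $\Sigma$ be a flag complex on the vertex set $[n]$ and let $\ell$ be a positive integer. Let $\Delta$ and $\Delta'$ be the simplicial complexes (collections of subsets of $[n]$ closed under taking subsets) whose Stanley–Reisner ideals are $I_\Delta=I(\overline{\mathrm{skel}_\Sigma(\ell)})$ and $I_{\Delta'}=I(\overline{\mathrm{skel}_\Sigma(1)})$. Then $\Delta^\vee=\mathrm{skel}_{(\Delta')^\vee}(n-\ell-2)$.
   Context: $S=K[x_1,\ldots,x_n]$, $x_F=\prod_{i\in F}x_i$. For a simplicial complex $\Gamma$, the Stanley–Reisner ideal $I_\Gamma$ is generated by all $x_F$ with $F\notin\Gamma$, and the facet ideal $I(\Gamma)$ is generated by the $x_F$ with $F$ a facet (maximal face) of $\Gamma$. $\Sigma$ is flag if all its minimal nonfaces have exactly two elements (the full simplex is also considered flag). $\mathrm{skel}_\Gamma(i)$ is the complex whose facets are the $i$-dimensional faces of $\Gamma$ (dimension of $F$ is $|F|-1$). For $k\ge1$, $\overline{\mathrm{skel}_\Sigma(k)}$ is the complex whose facets are the $(k+1)$-element subsets of $[n]$ not belonging to $\Sigma$; thus $I(\overline{\mathrm{skel}_\Sigma(k)})$ is generated by $x_F$ for $F\subseteq[n]$, $|F|=k+1$, $F\notin\Sigma$. The Alexander dual is $\Gamma^\vee=\{[n]\setminus F: F\subseteq[n],\ F\notin\Gamma\}$. *)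

(* Defs.v *)
From HB Require Import structures.
From mathcomp Require Import all_boot all_order all_algebra.
Set Implicit Arguments. Unset Strict Implicit. Unset Printing Implicit Defensive.
Import GRing.Theory Num.Theory.

Section Defs.
Variable T : finType.

Definition is_complex (K : {set {set T}}) : Prop :=
  forall A B : {set T}, B \subset A -> A \in K -> B \in K.

Definition min_nonface (K : {set {set T}}) (F : {set T}) : Prop :=
  F \notin K /\ (forall G : {set T}, G \proper F -> G \in K).

Definition flag (K : {set {set T}}) : Prop :=
  forall F : {set T}, min_nonface K F -> #|F| = 2.

(* A squarefree monomial ideal generated by the monomials x_F (F in S) is
   encoded by the set of supports A of the squarefree monomials x_A it
   contains: x_A lies in the ideal iff x_F divides x_A for some F in S.
   Two ideals generated by squarefree monomials are equal iff they contain the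
   same squarefree monomials. *)
Definition mono_ideal (S : {set {set T}}) : {set {set T}} :=
  [set A : {set T} | [exists F in S, F \subset A]].

Definition SR_ideal (K : {set {set T}}) : {set {set T}} :=
  mono_ideal [set F : {set T} | F \notin K].

Definition facets (K : {set {set T}}) : {set {set T}} :=
  [set F in K | [forall G in K, (F \subset G) ==> (G == F)]].

Definition facet_ideal (K : {set {set T}}) : {set {set T}} :=
  mono_ideal (facets K).

(* skel_K(i): the complex whose facets are the i-dimensional faces of K
   (dimension of F is |F|-1); i is an integer *)
Definition skel (K : {set {set T}}) (i : int) : {set {set T}} :=
  [set A : {set T} | [exists F in K, ((#|F|%:Z == i + 1)%R && (A \subset F))]].

(* \overline{skel_S(k)}: the complex whose facets are the (k+1)-subsets
   of the ground set not belonging to S *)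
Definition cskel (S : {set {set T}}) (k : nat) : {set {set T}} :=
  [set A : {set T} | [exists F : {set T}, [&& #|F| == k.+1, F \notin S & A \subset F]]].

Definition alex_dual (K : {set {set T}}) : {set {set T}} :=
  [set ~: F | F in [set F : {set T} | F \notin K]].

End Defs.

(* Main.v *)
Require Import Defs.
From mathcomp Require Import all_boot all_order all_algebra.
From mathcomp Require Import zify.
Import GRing.Theory Num.Theory.

Section Aux.
Variable T : finType.

Lemma SR_idealE (K : {set {set T}}) : is_complex K -> SR_ideal K = ~: K.
Proof.
move=> cK; apply/setP => A; rewrite !inE; apply/existsP/idP.
- case=> F /andP[]; rewrite inE => FK FA; apply/negP => AK; move/negP: FK; apply.
  exact: cK AK.
- by move=> AK; exists A; rewrite inE AK subxx.
Qed.

Lemma facets_cskel (S : {set {set T}}) k :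
  facets (cskel S k) = [set F : {set T} | (#|F| == k.+1) && (F \notin S)].
Proof.
apply/setP => F; rewrite !inE; apply/andP/idP.
- case => /existsP[H /and3P[cH HS FH]] /forallP /(_ H).
  rewrite ?inE; have -> : [exists F0 : {set T}, [&& #|F0| == k.+1, F0 \notin S & H \subset F0]].
    by apply/existsP; exists H; rewrite cH HS subxx.
  by rewrite FH /= => /eqP <-; rewrite cH HS.
- move=> /andP[cF FS]; split.
    by apply/existsP; exists F; rewrite cF FS subxx.
  apply/forallP => G; apply/implyP; rewrite ?inE => /existsP[H /and3P[cH HS GH]].
  apply/implyP => FG; rewrite eqEsubset FG andbT.
  have FH : F \subset H by exact: subset_trans GH.
  have : F == H by rewrite eqEcard FH /= (eqP cF) (eqP cH).
  by move/eqP => ->.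
Qed.

Lemma Delta_mem (S K : {set {set T}}) k : is_complex K ->
  SR_ideal K = facet_ideal (cskel S k) ->
  forall A, (A \in K) = ~~ [exists F : {set T}, [&& #|F| == k.+1, F \notin S & F \subset A]].
Proof.
move=> cK E A; have := congr1 (fun X : {set {set T}} => A \in X) E.
rewrite SR_idealE // in_setC /facet_ideal /mono_ideal inE facets_cskel => /(congr1 negb); rewrite negbK => ->.
congr (~~ _); apply/existsP/existsP => -[F].
  by rewrite !inE => /andP[/andP[a b] c]; exists F; rewrite a b c.
by move=> /and3P[a b c]; exists F; rewrite !inE a b c.
Qed.

Lemma alexE (K : {set {set T}}) A : (A \in alex_dual K) = (~: A \notin K).
Proof.
apply/imsetP/idP.
- by case=> F; rewrite inE => FK ->; rewrite setCK.
- by move=> H; exists (~: A); rewrite ?inE ?setCK.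
Qed.

Lemma flag_two (S : {set {set T}}) F : is_complex S -> flag S -> F \notin S ->
  exists E : {set T}, [&& #|E| == 2, E \notin S & E \subset F].
Proof.
move=> cS fS FS.
have P0 : (F \subset F) && (F \notin S) by rewrite subxx FS.
case: (@arg_minnP _ F (fun E : {set T} => (E \subset F) && (E \notin S)) (fun E : {set T} => #|E|) P0) => E /andP[EF ES] Emin.
exists E; rewrite ES EF !andbT. apply/eqP; apply: (fS E); split => // G GE.
apply/negPn/negP => GS.
have := Emin G; rewrite (subset_trans (proper_sub GE) EF) GS => /(_ isT).
by rewrite leqNgt proper_card.
Qed.

End Aux.

Theorem proposition1p3 (n l : nat) (Sigma Delta Delta' : {set {set 'I_n}}) :
  is_complex Sigma -> flag Sigma -> (0 < l)%N ->
  is_complex Delta -> is_complex Delta' ->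
  SR_ideal Delta = facet_ideal (cskel Sigma l) ->
  SR_ideal Delta' = facet_ideal (cskel Sigma 1) ->
  alex_dual Delta = skel (alex_dual Delta') (n%:Z - l%:Z - 2)%R.
Proof.
move=> cS fS l0 cD cD' ED ED'.
have mD := @Delta_mem _ Sigma _ _ cD ED; have mD' := @Delta_mem _ Sigma _ _ cD' ED'.
have cardC (X : {set 'I_n}) : #|~: X| = (n - #|X|)%N.
  by rewrite cardsCs card_ord setCK.
have cardle (X : {set 'I_n}) : (#|X| <= n)%N.
  by apply: leq_trans (max_card X) _; rewrite card_ord.
apply/setP => A; rewrite alexE mD negbK inE; apply/existsP/existsP.
- case=> F /and3P[cF FS FA]; exists (~: F).
  rewrite alexE mD' negbK setCK cardC.
  have [E /and3P[cE ES EF]] := @flag_two _ _ _ cS fS FS.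
  apply/and3P; split.
  + by apply/existsP; exists E; rewrite cE ES EF.
  + have := cardle F; move: cF => /eqP cF Hle; apply/eqP; rewrite cF in Hle *.
    lia.
  + by rewrite subsetC.
- case=> G /and3P[]; rewrite alexE mD' negbK => /existsP[E /and3P[cE ES EF]] cG AG.
  exists (~: G); apply/and3P; split.
  + have := cardle G; rewrite cardC => Hle; apply/eqP; have := eqP cG; lia.
  + move: ES; apply: contra => GS; exact: cS GS.
  + by rewrite subsetC setCK.
Qed.
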